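(* Let $n\in\mathbb{N}$ and let $A,B\in M_n(\mathbb{C})$ be unitary matrices. For $\lambda\in\mathbb{T}$ define the $2n\times 2n$ matrices \[S_\lambda=\begin{pmatrix}A&\lambda B\\ B&A\end{pmatrix},\qquad T_\lambda=\begin{pmatrix}B&A\\ \bar\lambda A&B\end{pmatrix}.\] Then for every $\lambda\in\mathbb{T}$ the matrices $S_\lambda$ and $T_\lambda$ commute, and \[\inf_{\lambda\in\mathbb{T}}\max\{\|S_\lambda\|,\|T_\lambda\|\}\leq\sqrt{2+2\sin\bigl(\tfrac{\pi}{2}(1-\tfrac1n)\bigr)}.\]
   Context: $\mathbb{T}$ is the unit circle in $\mathbb{C}$ and $\|\cdot\|$ is the operator norm. *)

(* Defs.v *)
From HB Require Import structures.
From mathcomp Require Import all_boot all_order all_algebra.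
From mathcomp Require Import all_classical all_reals all_analysis.
From mathcomp Require Import complex.
Set Implicit Arguments. Unset Strict Implicit. Unset Printing Implicit Defensive.
Import Order.TTheory GRing.Theory Num.Theory.
Local Open Scope ring_scope.
Local Open Scope classical_set_scope.

Definition cabs2 (R : realType) (z : R[i]) : R :=
  complex.Re z ^+ 2 + complex.Im z ^+ 2.

Definition vnorm (R : realType) (m : nat) (x : 'cV[R[i]]_m) : R :=
  Num.sqrt (\sum_(i < m) cabs2 (x i 0)).

Definition opnorm (R : realType) (m k : nat) (M : 'M[R[i]]_(m, k)) : R :=
  sup [set vnorm (M *m x) | x in [set x : 'cV[R[i]]_k | vnorm x <= 1]].

Definition Smat (R : realType) (n : nat) (A B : 'M[R[i]]_n) (l : R[i])
  : 'M[R[i]]_(n + n) := block_mx A (l *: B) B A.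

Definition Tmat (R : realType) (n : nat) (A B : 'M[R[i]]_n) (l : R[i])
  : 'M[R[i]]_(n + n) := block_mx B A ((conjc l) *: A) B.

(* Main.v *)
Require Import Defs.
From HB Require Import structures.
From mathcomp Require Import all_boot all_order all_algebra.
From mathcomp Require Import all_classical all_reals all_analysis.
From mathcomp Require Import complex.
From mathcomp Require Import ring lra zify.
Import Order.TTheory GRing.Theory Num.Theory.
Local Open Scope ring_scope.
Section S1.
Variable R : realType.
Implicit Types x y : R[i].
Local Notation Re := complex.Re.
Local Notation Im := complex.Im.

Lemma mulcJ x : conjc x * x = ((cabs2 x)%:C)%C.
Proof. case: x => a b; rewrite /cabs2 /=. congr Complex; ring. Qed.
Lemma conjC_c x : Num.conj x = conjc x. Proof. by case: x. Qed.
Lemma cabs2M x y : cabs2 (x*y) = cabs2 x * cabs2 y.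
Proof. case: x => a b; case: y => c d; rewrite /cabs2 /=. ring. Qed.
Lemma cabs2J x : cabs2 (conjc x) = cabs2 x.
Proof. case: x => a b; rewrite /cabs2 /=. ring. Qed.
Lemma cabs2_ge0 x : 0 <= cabs2 x.
Proof. rewrite /cabs2; nra. Qed.

Lemma PW (a b d l : R[i]) (c K : R) :
  cabs2 d = 1 -> cabs2 l = 1 -> Re (l * (d * d)) <= c -> 0 <= K -> K ^+ 2 = 2 + 2 * c ->
  cabs2 (a + l * (d * b)) + cabs2 (d * a + b) <= (2 + K) * (cabs2 a + cabs2 b).
Proof.
move=> hd hl hc hK hK2.
have E : forall a b d l : R[i], cabs2 (a + l * (d * b)) + cabs2 (d * a + b) =
   cabs2 a + cabs2 l * cabs2 d * cabs2 b + cabs2 d * cabs2 a + cabs2 b + 2 * Re ((conjc a * b) * (l * d + conjc d)).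
  move=> [a1 a2] [b1 b2] [d1 d2] [l1 l2].
  rewrite /cabs2 /=; ring.
have G : forall d l : R[i], cabs2 (l * d + conjc d) = cabs2 l * cabs2 d + cabs2 d + 2 * Re (l * (d * d)).
  move=> [d1 d2] [l1 l2].
  rewrite /cabs2 /=; ring.
have CS : forall p g : R[i], Re (p * g) ^+ 2 <= cabs2 p * cabs2 g.
  move=> [p1 p2] [g1 g2]; rewrite /cabs2 /=.
  have h : 0 <= (p1 * g2 + p2 * g1) ^+ 2 by apply: sqr_ge0.
  nra.
rewrite E hd hl !mul1r.
have {}CS := CS (conjc a * b) (l * d + conjc d).
rewrite G hd hl !mul1r in CS.
rewrite cabs2M cabs2J in CS.
have hX := cabs2_ge0 a; have hY := cabs2_ge0 b.
set X := cabs2 a in CS hX *; set Y := cabs2 b in CS hY *.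
set r := Re _ in CS *.
have h1 : r ^+ 2 <= X * Y * K ^+ 2.
  apply: (le_trans CS); rewrite hK2; apply: ler_wpM2l; [nra | lra].
have h2 : (2 * r) ^+ 2 <= (K * (X + Y)) ^+ 2.
  have h0 : 0 <= K^+2 * (X - Y)^+2 by rewrite mulr_ge0 // sqr_ge0.
  have -> : (K*(X+Y))^+2 = K^+2*(X-Y)^+2 + 4*(X*Y*K^+2) by ring.
  have -> : (2*r)^+2 = 4 * r^+2 by ring.
  lra.
have h3 : 2 * r <= K * (X + Y).
  have h4 : 0 <= K * (X + Y) by nra.
  have [hr|hr] := lerP (2 * r) 0; first lra.
  by rewrite -(ler_pXn2r (n:=2)) // ?nnegrE ?ltW.
lra.
Qed.
End S1.

Section S2.
Variable R : realType.
Local Notation Re := complex.Re.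
Local Notation Im := complex.Im.

Lemma cos_le_gen (a t : R) : 0 <= a -> a <= pi -> a <= t -> t <= pi *+ 2 - a ->
  cos t <= cos a.
Proof.
move=> a0 api hat ta.
have key : forall t, a <= t -> t <= pi -> cos t <= cos a.
  move=> s h1 h2; rewrite leNgt; apply/negP.
  rewrite ltr_cos ?in_itv /= ?(le_trans a0) ?h1 ?h2 ?a0 ?api //; lra.
have [tp|tp] := lerP t pi; first exact: key.
have -> : cos t = cos (pi *+ 2 - t).
  by rewrite addrC cosD2pi cosN.
apply: key; lra.
Qed.

Lemma unit_far (u v : R[i]) (c : R) : cabs2 u = 1 -> cabs2 v = 1 -> 0 <= c ->
  c < Re u -> c < Re v -> 2 * c ^+ 2 - 1 < Re (u * conjc v).
Proof.
case: u => u1 u2; case: v => v1 v2; rewrite /cabs2 /= => hu hv c0 hu1 hv1.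
have h1 : c ^+ 2 < u1 * v1 by nra.
have hu2 : u2 ^+ 2 < 1 - c ^+ 2 by nra.
have hv2 : v2 ^+ 2 < 1 - c ^+ 2 by nra.
have h2 : (u2 * v2) ^+ 2 < (1 - c ^+ 2) ^+ 2.
  rewrite exprMn; apply: (le_lt_trans (y := u2 ^+ 2 * (1 - c^+2))).
    apply: ler_wpM2l; [exact: sqr_ge0 | exact: ltW].
  by rewrite ltr_pM2r; nra.
have h3 : - (1 - c ^+ 2) < u2 * v2.
  have hc : 0 < 1 - c ^+ 2 by nra.
  rewrite ltrNl; have [hh|hh] := lerP 0 (u2 * v2); first lra.
  rewrite -(ltr_pXn2r (n:=2)) ?nnegrE ?ltW //; last by lra.
  by rewrite sqrrN.
lra.
Qed.
End S2.

Section S3.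
Variable R : realType.
Local Notation Re := complex.Re.
Local Notation Im := complex.Im.

Lemma PH n (e : 'I_n -> R[i]) : (forall i, cabs2 (e i) = 1) ->
  exists l : R[i], cabs2 l = 1 /\ forall i, Re (l * e i) <= cos (pi * n%:R^-1).
Proof.
case: n e => [|n] e he.
  exists 1; split; last by case.
  by rewrite /cabs2 /=; rewrite expr0n /= addr0 expr1n.
set N := n.+1.
set a : R := pi * N%:R^-1.
have N0 : (0 : R) < N%:R by rewrite ltr0n.
have a0 : 0 < a by rewrite /a mulr_gt0 ?pi_gt0 ?invr_gt0.
have aN : a * N%:R = pi by rewrite /a mulfVK // gt_eqF.
have N1 : (1 : R) <= N%:R by rewrite ler1n.
have api : a <= pi by nra.
pose th (k : nat) : R := (2 * k%:R + 1) * a.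
pose r (k : nat) : R[i] := Complex (cos (th k)) (sin (th k)).
pose e0 := e ord0.
pose lam (k : nat) := conjc e0 * r k.
have hr : forall k, cabs2 (r k) = 1 by move=> k; rewrite /cabs2 /= cos2Dsin2.
have hlam : forall k, cabs2 (lam k) = 1 by move=> k; rewrite cabs2M cabs2J he hr mulr1.
have T1 : forall k : 'I_N, cos (th k) <= cos a.
  move=> k; have hk : (k%:R + 1 : R) <= N%:R.
    by rewrite natr1 ler_nat.
  have hk0 : (0 : R) <= k%:R by [].
  apply: cos_le_gen => //; [exact: ltW | rewrite /th; nra | rewrite /th mulr2n -aN; nra].
have Re0 : forall k, Re (lam k * e0) = cos (th k).
  move=> k; rewrite /lam mulrAC mulcJ he.
  by rewrite /r /= mul1r mul0r subr0.
have [[k Hk]|H] := pselect (exists k : 'I_N, forall i, Re (lam k * e i) <= cos a).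
  by exists (lam k); split.
have H' : forall k : 'I_N, exists i, cos a < Re (lam k * e i).
  move=> k; apply: contrapT => Hn; apply: H; exists k => i.
  rewrite leNgt; apply/negP => Hlt; apply: Hn; by exists i.
have [f Hf] := fin_all_exists H'.
suff finj : injective f.
  have /codomP [k Hk] := injF_onto finj ord0.
  have := Hf k; rewrite -Hk -/e0 Re0 => /lt_le_trans /(_ (T1 k)).
  by rewrite ltxx.
move=> j k Hjk; apply: contrapT => njk.
have jk : (j : nat) != k by apply/eqP => h; apply: njk; exact: val_inj.
have N2 : (2 : R) <= N%:R.
  have N2n : (2 <= N)%N.
    have := ltn_ord j; have := ltn_ord k; move: jk; rewrite /N; lia.
  by move: N2n; rewrite -(ler_nat R)...
have a2 : a *+ 2 <= pi by rewrite mulr2n; nra.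
have c0 : 0 <= cos a by apply: cos_ge0_pihalf; nra.
have hu := Hf j; have hv := Hf k; rewrite Hjk in hu.
have hue : cabs2 (lam j * e (f k)) = 1 by rewrite cabs2M hlam he mulr1.
have hve : cabs2 (lam k * e (f k)) = 1 by rewrite cabs2M hlam he mulr1.
have := @unit_far R _ _ _ hue hve c0 hu hv.
have -> : lam j * e (f k) * conjc (lam k * e (f k)) =
   (conjc e0 * e0) * (conjc (e (f k)) * e (f k)) * (r j * conjc (r k)).
  rewrite /lam !rmorphM /= conjcK; ring.
rewrite !mulcJ !he.
have -> : ((1 : R)%:C)%C = 1 by [].
rewrite !mul1r /r /= mulrN opprK -cosB.
have T2 : forall p q : 'I_N, (p < q)%N -> cos (th q - th p) <= 2 * cos a ^+ 2 - 1.
  move=> p q hpq.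
  have hpq' : (p%:R + 1 : R) <= q%:R by rewrite natr1 ler_nat.
  have hq : (q%:R + 1 : R) <= N%:R by rewrite natr1 ler_nat.
  have hp0 : (0 : R) <= p%:R by [].
  have -> : 2 * cos a ^+ 2 - 1 = cos (a *+ 2) by rewrite cos_mulr2n mulr2n; ring.
  apply: cos_le_gen => //; rewrite ?mulr2n /th; try nra.
have [hjk|hjk|hjk] := ltngtP j k.
- have -> : cos (th j - th k) = cos (th k - th j) by rewrite -cosN opprB.
  move=> h; have := T2 _ _ hjk; lra.
- move=> h; have := T2 _ _ hjk; lra.
- by rewrite hjk eqxx in jk.
Qed.
End S3.

Section S4.
Variable R : realType.
Lemma Ktrig (n : nat) :
  0 <= 2 * sin (pi / 2 * (1 - n%:R^-1)) :> R /\
  (2 * sin (pi / 2 * (1 - n%:R^-1))) ^+ 2 = 2 + 2 * cos (pi * n%:R^-1) :> R.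
Proof.
set t : R := n%:R^-1.
have t0 : 0 <= t by rewrite /t invr_ge0.
have t1 : t <= 1.
  rewrite /t; case: n {t t0} => [|m]; first by rewrite invr0.
  by rewrite invr_le1 ?ler1n ?unitfE ?pnatr_eq0 ?ltr0n.
have -> : sin (pi / 2 * (1 - t)) = cos (pi / 2 * t).
  by rewrite -[cos _]opprK -sinBpihalf -sinN; congr sin; ring.
have pi0 := pi_gt0 R.
split.
  rewrite mulr_ge0 // cos_ge0_pihalf //; apply/andP; split; nra.
have -> : pi * t = (pi / 2 * t) *+ 2 by rewrite mulr2n; field.
rewrite cos_mulr2n mulr2n; ring.
Qed.
End S4.

Section S5.
Variable R : realType.
Local Notation C := (R[i]).
Local Notation adj M := (map_mx Num.conj (trmx M)).
Local Notation Re := complex.Re.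

Definition ss {m} (x : 'cV[C]_m) : R := \sum_i cabs2 (x i 0).

Lemma ss_dot m (x : 'cV[C]_m) : ((ss x)%:C)%C = (adj x *m x) 0 0.
Proof.
rewrite /ss raddf_sum mxE; apply: eq_bigr => i _.
by rewrite !mxE conjC_c mulcJ.
Qed.

Lemma unit_adj n (M : 'M[C]_n) : M \is unitarymx -> adj M *m M = 1%:M.
Proof. by move/unitarymxP; exact: mulmx1C. Qed.

Lemma ss_unitary n (M : 'M[C]_n) x : M \is unitarymx -> ss (M *m x) = ss x.
Proof.
move=> hM; apply: (@complexI R).
by rewrite !ss_dot trmx_mul map_mxM -!mulmxA [adj M *m (M *m x)]mulmxA unit_adj // mul1mx.
Qed.

Lemma ss_col m1 m2 (u : 'cV[C]_m1) (v : 'cV[C]_m2) : ss (col_mx u v) = ss u + ss v.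
Proof.
by rewrite /ss big_split_ord; congr (_ + _); apply: eq_bigr => i _;
  rewrite ?col_mxEu ?col_mxEd.
Qed.

Lemma ss_scale m l (x : 'cV[C]_m) : cabs2 l = 1 -> ss (l *: x) = ss x.
Proof. by move=> hl; rewrite /ss; apply: eq_bigr => i _; rewrite mxE cabs2M hl mul1r. Qed.

Lemma ss_ge0 m (x : 'cV[C]_m) : 0 <= ss x.
Proof. by apply: sumr_ge0 => i _; apply: cabs2_ge0. Qed.

Lemma ssST n (A B : 'M[C]_n) l (y z : 'cV[C]_n) : A \is unitarymx -> cabs2 l = 1 ->
  ss (Smat A B l *m col_mx y z) = ss (y + l *: (adj A *m B *m z)) + ss (adj A *m B *m y + z) /\
  ss (Tmat A B l *m col_mx y z) = ss (y + l *: (adj A *m B *m z)) + ss (adj A *m B *m y + z).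
Proof.
move=> hA hl; rewrite /Smat /Tmat !mul_block_col !ss_col.
have e1 : A *m y + l *: B *m z = A *m (y + l *: (adj A *m B *m z)).
  by rewrite mulmxDr -scalemxAr !mulmxA (unitarymxP hA) mul1mx scalemxAl.
have e2 : B *m y + A *m z = A *m (adj A *m B *m y + z).
  by rewrite mulmxDr !mulmxA (unitarymxP hA) mul1mx.
have e3 : conjc l *: A *m y + B *m z = conjc l *: (A *m (y + l *: (adj A *m B *m z))).
  rewrite mulmxDr -scalemxAr !mulmxA (unitarymxP hA) mul1mx scalerDr scalerA.
  by rewrite mulcJ hl scale1r scalemxAl.
rewrite e1 e2 e3 ss_scale ?cabs2J // !ss_unitary //; split => //.
by rewrite addrC.
Qed.

Lemma KL n (U : 'M[C]_n) : U \is unitarymx -> exists l, cabs2 l = 1 /\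
  forall y z : 'cV[C]_n, ss (y + l *: (U *m z)) + ss (U *m y + z)
     <= (2 + 2 * sin (pi / 2 * (1 - n%:R^-1))) * (ss y + ss z).
Proof.
move=> hU.
have hN : U \is normalmx.
  by apply/normalmxP; rewrite (unitarymxP hU) unit_adj.
have [P [d [hP hU']]] : exists P : 'M[C]_n, exists d : 'rV[C]_n,
    P \is unitarymx /\ U = adj P *m diag_mx d *m P.
  exists (spectralmx U), (spectral_diag U); split; first exact: spectral_unitarymx.
  by rewrite -invmx_unitary ?spectral_unitarymx //; apply/orthomx_spectralP.
have hPa : adj P \is unitarymx by rewrite trmxC_unitary.
move: hU'; set D := diag_mx d => hU'.
have hD : D = P *m U *m adj P.
  rewrite hU' !mulmxA (unitarymxP hP) mul1mx -mulmxA (unitarymxP hP) mulmx1.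
  reflexivity.
have hDu : D \is unitarymx.
  rewrite hD; apply: mul_unitarymx; last exact: hPa.
  apply: mul_unitarymx; [exact: hP | exact: hU].
have hd : forall i, cabs2 (d 0 i) = 1.
  move=> i; move/unitarymxP: hDu => /matrixP /(_ i i).
  rewrite mul_diag_mx !mxE !eqxx !mulr1n conjC_c mulrC mulcJ.
  by move=> /(congr1 (@complex.Re R)) /=.
have he : forall i, cabs2 (d 0 i * d 0 i) = 1 by move=> i; rewrite cabs2M hd mulr1.
have [l [hl hle]] := @PH R n _ he.
exists l; split => // y z.
have ey : y + l *: (U *m z) = adj P *m (P *m y + l *: (D *m (P *m z))).
  by rewrite hU' mulmxDr !mulmxA (unit_adj _ _ hP) mul1mx -!scalemxAr !mulmxA.
have ez : U *m y + z = adj P *m (D *m (P *m y) + P *m z).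
  by rewrite hU' mulmxDr !mulmxA (unit_adj _ _ hP) mul1mx.
rewrite ey ez !(ss_unitary _ _ _ hPa) -(ss_unitary _ _ y hP) -(ss_unitary _ _ z hP).
move: (P *m y) (P *m z) => a b.
have [hK hK2] := Ktrig R n.
rewrite /ss -!big_split /= mulr_sumr; apply: ler_sum => i _.
rewrite !mul_diag_mx !mxE.
apply: PW; [exact: hd | exact: hl | exact: hle | exact: hK | exact: hK2].
Qed.
End S5.
Section S6.
Variable R : realType.
Local Notation C := (R[i]).
Local Notation adj M := (map_mx Num.conj (trmx M)).
Local Notation ss := (ss R).

Lemma ST_comm n (A B : 'M[C]_n) l : cabs2 l = 1 ->
  Smat A B l *m Tmat A B l = Tmat A B l *m Smat A B l.
Proof.
move=> hl; rewrite /Smat /Tmat !mulmx_block.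
have hll : l * conjc l = 1 by rewrite mulrC mulcJ hl.
have hll' : conjc l * l = 1 by rewrite mulrC.
rewrite -!scalemxAl -!scalemxAr !scalerA hll hll' !scale1r.
by congr block_mx; rewrite addrC.
Qed.

Lemma vnormE m (x : 'cV[C]_m) : vnorm x = Num.sqrt (ss x).
Proof. by []. Qed.

Lemma ss0 m : ss (0 : 'cV[C]_m) = 0.
Proof. by rewrite /ss big1 // => i _; rewrite mxE /cabs2 /= expr0n /= addr0. Qed.

Lemma opnorm_le m k (M : 'M[C]_(m, k)) (c : R) : 0 <= c ->
  (forall x, ss (M *m x) <= c * ss x) -> opnorm M <= Num.sqrt c.
Proof.
move=> c0 hM; rewrite /opnorm; apply: ge_sup.
  exists (vnorm (M *m 0)); exists 0; last by [].
  by rewrite /= vnormE ss0 sqrtr0 ler01.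
move=> _ [x hx <-]; rewrite vnormE.
have hs : ss x <= 1.
  move: hx; rewrite /= vnormE => hx.
  rewrite -(sqr_sqrtr (@ss_ge0 R _ x)) -(expr1n _ 2).
  rewrite ler_pXn2r ?nnegrE ?sqrtr_ge0 ?ler01 //.
apply: ler_wsqrtr; apply: (le_trans (hM x)).
by rewrite -{2}(mulr1 c) ler_wpM2l.
Qed.

Lemma opnorm_ge0 m k (M : 'M[C]_(m, k)) : 0 <= opnorm M.
Proof.
rewrite /opnorm; set E := (X in sup X).
have hE : E (vnorm (M *m 0)) by exists 0; rewrite /= ?vnormE ?ss0 ?sqrtr0 ?ler01.
have [h|h] := pselect (has_ubound E).
  have := ub_le_sup h; move/ubP => /(_ _ hE) hs.
  apply: le_trans hs; exact: sqrtr_ge0.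
by rewrite sup_out // => -[_ hu]; apply: h.
Qed.
End S6.

Local Open Scope classical_set_scope.

Theorem theoremA1 (R : realType) (n : nat) (A B : 'M[R[i]]_n) :
  A \is unitarymx -> B \is unitarymx ->
  (forall l : R[i], cabs2 l = 1 -> Smat A B l *m Tmat A B l = Tmat A B l *m Smat A B l) /\
  inf [set Num.max (opnorm (Smat A B l)) (opnorm (Tmat A B l)) | l in [set l : R[i] | cabs2 l = 1]]
    <= Num.sqrt (2 + 2 * sin (pi / 2 * (1 - n%:R^-1))).
Proof.
move=> hA hB; split; first by move=> l hl; exact: ST_comm.
set K := 2 + 2 * sin _.
have [hK0 _] := Ktrig R n.
have K0 : 0 <= K by rewrite /K; lra.
have hAa : map_mx Num.conj (trmx A) \is unitarymx by rewrite trmxC_unitary.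
have hU := mul_unitarymx hAa hB.
have [l [hl hb]] := @KL R _ _ hU.
have hx : forall x, ss R (Smat A B l *m x) <= K * ss R x /\ ss R (Tmat A B l *m x) <= K * ss R x.
  move=> x; rewrite -[x]vsubmxK.
  have [-> ->] := @ssST R _ A B l (usubmx x) (dsubmx x) hA hl.
  by rewrite ss_col; split; apply: hb.
set E := (X in inf X).
have lb : has_lbound E.
  exists 0 => _ [l' _ <-]; rewrite le_max; apply/orP; left; exact: opnorm_ge0.
apply: le_trans (ge_inf lb _) _.
  exists l; [exact: hl | reflexivity].
rewrite ge_max; apply/andP; split; apply: opnorm_le; try exact: K0.
  by move=> x; exact: (hx x).1.
by move=> x; exact: (hx x).2.
Qed.
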